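(* Let $n\ge 1$ and $k\ge 2$ be integers, and let $A\subseteq\mathbb{Z}_{2n}$ with $|A|\ge n+k$. Then $\Sigma_k(A)=\mathbb{Z}_{2n}$.
   Context: For a finite set $A\subseteq\mathbb{Z}_m$ and an integer $1\le k\le |A|$, $\Sigma_k(A)$ (written $A\psi^{k-1}A$ in the paper) denotes the set of all elements of $\mathbb{Z}_m$ that can be written as a sum of $k$ distinct elements of $A$. *)

(* Defs.v *)
From mathcomp Require Import all_boot all_algebra.
Set Implicit Arguments. Unset Strict Implicit. Unset Printing Implicit Defensive.
Import GRing.Theory.
Local Open Scope ring_scope.

Definition restricted_sumset (G : finZmodType) (k : nat) (A : {set G}) : {set G} :=
  [set g : G | [exists B : {set G}, [&& B \subset A, #|B| == k & \sum_(x in B) x == g]]].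

(* Main.v *)
Require Import Defs.
From mathcomp Require Import all_boot all_algebra zify.
Import GRing.Theory.
Local Open Scope ring_scope.

Lemma dbl0 (n : nat) (hn : (1 <= n)%N) (z : 'Z_(2 * n)) :
  z + z = 0 -> z = 0 \/ nat_of_ord z = n.
Proof.
move=> /(congr1 val) /= H.
have hN : (Zp_trunc (2 * n)).+2 = (2 * n)%N by apply: Zp_cast; lia.
suff: (nat_of_ord z = 0 \/ nat_of_ord z = n)%N.
  by case=> h; [left; apply: val_inj | right].
move: H (ltn_ord z).
move: (nat_of_ord z) => m; rewrite hN => H hz.
have : (m + m == 0 %[mod 2 * n])%N by rewrite H mod0n.
rewrite eqn_mod_dvd ?subn0 // => /dvdnP [q Hq].
have : (q < 2)%N.
  rewrite ltnNge; apply/negP => Hq2.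
  have : (2 * (2 * n) <= q * (2 * n))%N by apply: leq_mul.
  lia.
case: q Hq => [|[|//]] /= Hq _; lia.
Qed.

Lemma fix_card (n : nat) (hn : (1 <= n)%N) (g : 'Z_(2 * n)) :
  (#|[set x : 'Z_(2 * n) | (x + x)%R == g]| <= 2)%N.
Proof.
set F := [set x | _].
have hN : (n < (Zp_trunc (2 * n)).+2)%N by rewrite Zp_cast; lia.
pose c : 'Z_(2 * n) := Ordinal hN.
case: (set_0Vmem F) => [->|[x0 Hx0]]; first by rewrite cards0.
have : F \subset [set x0; x0 + c].
  apply/subsetP => x; rewrite !inE => /eqP Hx.
  move: Hx0; rewrite inE => /eqP Hx0.
  have : (x - x0) + (x - x0) = 0.
    by rewrite addrACA -opprD Hx Hx0 subrr.
  case/(@dbl0 n hn) => h.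
    by rewrite (subr0_eq h) eqxx.
  apply/orP; right; apply/eqP.
  have -> : c = x - x0 by apply: val_inj.
  by rewrite addrC subrK.
move/subset_leq_card; rewrite cards2; case: (_ != _) => //= h.
by apply: leq_trans h _.
Qed.

Lemma two_case (n : nat) (hn : (1 <= n)%N) (A : {set 'Z_(2 * n)}) (g : 'Z_(2 * n)) :
  (n + 2 <= #|A|)%N -> exists x, [/\ x \in A, g - x \in A & g - x != x].
Proof.
move=> hA.
case: (boolP [exists x in A, (g - x \in A) && (g - x != x)]).
  by case/exists_inP => x xA /andP [h1 h2]; exists x.
move/exists_inP => H; exfalso.
set F := [set x : 'Z_(2 * n) | (x + x)%R == g].
set S := A :\: F.
set T := [set g - x | x in S].
have inj : injective (fun x : 'Z_(2 * n) => g - x).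
  by move=> x y /addrI /oppr_inj.
have hT : #|T| = #|S| by rewrite card_imset.
have hdis : A :&: T = set0.
  apply/setP => y; rewrite !inE; apply/negP => /andP [yA /imsetP [x xS ey]]; subst y.
  move: xS; rewrite !inE => /andP [xF xA].
  apply: H; exists x => //; rewrite yA /=.
  apply: contra xF => /eqP e; apply/eqP.
  by rewrite -{1}e subrK.
have hU := cardsUI A T.
rewrite hdis cards0 addn0 in hU.
have hmax : (#|A :|: T| <= 2 * n)%N.
  have h2 : (Zp_trunc (2 * n)).+2 = (2 * n)%N by apply: Zp_cast; lia.
  have := max_card (A :|: T); rewrite card_ord; lia.
have hS : #|S| = (#|A| - #|A :&: F|)%N by rewrite cardsD.
have hAF : (#|A :&: F| <= 2)%N.
  apply: leq_trans (@fix_card n hn g); apply: subset_leq_card; exact: subsetIr.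
have e1 : (#|A| + (#|A| - #|A :&: F|) <= 2 * n)%N by rewrite -hS -hT -hU.
move: e1 hAF hA; clear; lia.
Qed.

Lemma gen (n : nat) (hn : (1 <= n)%N) (k : nat) : (2 <= k)%N ->
  forall (A : {set 'Z_(2 * n)}), (n + k <= #|A|)%N -> forall g : 'Z_(2 * n),
  exists B : {set 'Z_(2 * n)}, [/\ B \subset A, #|B| = k & \sum_(x in B) x = g].
Proof.
elim: k => [//|k IH] hk A hA g.
case: (ltnP k 2) => hk2.
  have k1 : k = 1%N by lia.
  subst k.
  have [x [xA gxA ne]] := @two_case n hn A g hA.
  exists [set x; g - x]; split.
  - by apply/subsetP => y; rewrite !inE => /orP [] /eqP ->.
  - by rewrite cards2 eq_sym ne.
  - by rewrite big_setU1 /= ?big_set1 ?inE 1?eq_sym // addrC subrK.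
have [a aA] : exists a, a \in A.
  apply/set0Pn; apply/negP => /eqP e; rewrite e cards0 in hA; lia.
have hA' : (n + k <= #|A :\ a|)%N.
  move: hA; rewrite (cardsD1 a A) aA; lia.
have [B [BA cB sB]] := IH hk2 _ hA' (g - a).
have aB : a \notin B.
  by apply/negP => /(subsetP BA); rewrite !inE eqxx.
exists (a |: B); split.
- apply/subsetP => y; rewrite !inE => /orP [/eqP -> //|yB].
  by move: (subsetP BA y yB); rewrite !inE => /andP [].
- by rewrite cardsU1 aB cB.
- by rewrite big_setU1 //= sB addrC subrK.
Qed.

Theorem mainTheorem10 (n k : nat) (hn : (1 <= n)%N) (hk : (2 <= k)%N)
  (A : {set 'Z_(2 * n)}) (hA : (n + k <= #|A|)%N) :
  restricted_sumset k A = [set: 'Z_(2 * n)].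
Proof.
apply/setP => g; rewrite inE [RHS]inE.
have [B [BA cB sB]] := @gen n hn k hk A hA g.
by apply/existsP; exists B; rewrite BA cB sB !eqxx.
Qed.
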